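(* Let $M\in\mathbb N$, let $X(M)$ be the subshift defined below and let $E$ be its code defined below. Then the generating function $f(E,z)=\sum_{u\in E}z^{|u|}$ equals $\frac12\left(1-\sqrt{1-8Mz^2}\right)$.
   Context: Let $\Sigma_1=\{\lambda,\xi,\rho_1,\dots,\rho_M,\eta_1,\dots,\eta_M\}$. $\mathcal M_1(M)$ is the monoid with zero generated by $\Sigma_1$ and an identity $\mathbf 1$, subject only to the relations $\lambda\rho_i=\mathbf 1$, $\lambda\eta_i=0$, $\xi\eta_i=\mathbf 1$, $\xi\rho_i=0$ ($1\le i\le M$), $\mathbf 1$ is the identity and $0$ is absorbing; no other relations. $\mathit{red}:\Sigma_1^*\to\mathcal M_1(M)$ sends a word to the product of its letters (empty word to $\mathbf 1$). $X(M)=\{x\in\Sigma_1^{\mathbb Z}:\mathit{red}(x_i\cdots x_j)\neq 0\ \forall i\le j\}$. The code $E$ is the set of blocks $w$ of $X(M)$ of the form $w=avb$ with $a\in\{\lambda,\xi\}$, $b\in\{\rho_1,\dots,\rho_M,\eta_1,\dots,\eta_M\}$, $\mathit{red}(ab)=\mathbf 1$, and $v$ a word with $\mathit{red}(v)=\mathbf 1$. $|u|$ is the length of $u$; the generating function is a formal power series. *)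

(* Defs.v *)
From HB Require Import structures.
From mathcomp Require Import all_boot all_order all_algebra.
From mathcomp Require Import boolp.
Set Implicit Arguments. Unset Strict Implicit. Unset Printing Implicit Defensive.
Import Order.TTheory GRing.Theory Num.Theory.

(* The alphabet Sigma_1 = {lambda, xi, rho_1..rho_M, eta_1..eta_M};
   indices 1..M are represented by 'I_M. *)
Inductive letter (M : nat) : Type :=
| Lam | Xi | Rho of 'I_M | Eta of 'I_M.
Arguments Lam {M}. Arguments Xi {M}.

Definition letter_code M (a : letter M) : (bool + (bool * 'I_M))%type :=
  match a with
  | Lam => inl true | Xi => inl false
  | Rho i => inr (true, i) | Eta i => inr (false, i) end.
Definition letter_decode M (c : (bool + (bool * 'I_M))%type) : letter M :=
  match c with
  | inl true => Lam | inl false => Xi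
  | inr (true, i) => Rho i | inr (false, i) => Eta i end.
Lemma letter_codeK M : cancel (@letter_code M) (@letter_decode M).
Proof. by case. Qed.
HB.instance Definition _ M := Equality.copy (letter M) (can_type (@letter_codeK M)).
HB.instance Definition _ M := Countable.copy (letter M) (can_type (@letter_codeK M)).
HB.instance Definition _ M := Finite.copy (letter M) (can_type (@letter_codeK M)).

(* The monoid with zero M_1(M) presented by generators Sigma_1, identity 1,
   an absorbing zero, and the relations
     lambda rho_i = 1, lambda eta_i = 0, xi eta_i = 1, xi rho_i = 0.
   Elements of the free monoid with zero are represented by
   option (seq letter): [Some w] is the word w, [None] is the zero. *)
Definition rel_one M (a b : letter M) : bool :=
  match a, b with Lam, Rho _ => true | Xi, Eta _ => true | _, _ => false end.
Definition rel_zero M (a b : letter M) : bool :=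
  match a, b with Lam, Eta _ => true | Xi, Rho _ => true | _, _ => false end.

Inductive mstep M : option (seq (letter M)) -> option (seq (letter M)) -> Prop :=
| mstep_one u v a b : rel_one a b -> mstep (Some (u ++ [:: a; b] ++ v)) (Some (u ++ v))
| mstep_zero u v a b : rel_zero a b -> mstep (Some (u ++ [:: a; b] ++ v)) None.

Inductive mcong M : option (seq (letter M)) -> option (seq (letter M)) -> Prop :=
| mcong_step x y : mstep x y -> mcong x y
| mcong_refl x : mcong x x
| mcong_sym x y : mcong x y -> mcong y x
| mcong_trans x y z : mcong x y -> mcong y z -> mcong x z.

Definition red_is_zero M (w : seq (letter M)) : Prop := mcong (Some w) None.
Definition red_is_one M (w : seq (letter M)) : Prop := mcong (Some w) (Some [::]).

Definition factor M (x : int -> letter M) (i : int) (n : nat) : seq (letter M) :=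
  mkseq (fun k => x (i + k%:Z)%R) n.

(* X(M): red(x_i ... x_j) <> 0 for all i <= j, i.e. for all factors of
   length j - i + 1 >= 1 *)
Definition in_XM M (x : int -> letter M) : Prop :=
  forall (i : int) (n : nat), ~ red_is_zero (factor x i n.+1).

Definition is_block M (w : seq (letter M)) : Prop :=
  exists x, in_XM x /\ exists i : int, w = factor x i (size w).

Definition is_opener M (a : letter M) : bool :=
  match a with Lam | Xi => true | _ => false end.
Definition is_closer M (b : letter M) : bool :=
  match b with Rho _ | Eta _ => true | _ => false end.

Definition in_E M (w : seq (letter M)) : Prop :=
  is_block w /\
  exists (a : letter M) (v : seq (letter M)) (b : letter M),
    [/\ w = a :: rcons v b, is_opener a, is_closer b,
        red_is_one [:: a; b] & red_is_one v].

Definition fps := nat -> rat.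
Definition fps_mul (s t : fps) : fps :=
  fun n => (\sum_(k < n.+1) s k * t (n - k)%N)%R.

(* generating function f(E,z) = sum_{u in E} z^|u| : its n-th coefficient
   is the number of words of length n in E *)
Definition genfun_E M : fps :=
  fun n => ((#|[set t : n.-tuple (letter M) | `[< in_E (tval t) >] ]|)%:R)%R.

Definition one_minus_8Mz2 (M : nat) : fps :=
  fun n => if n == 0%N then 1%R else if n == 2%N then (- (8 * M)%:R)%R else 0%R.

(* Main.v *)
Require Import Defs.
From HB Require Import structures.
From mathcomp Require Import all_boot all_order all_algebra.
From mathcomp Require Import boolp zify.
Import Order.TTheory GRing.Theory Num.Theory.
Set Implicit Arguments. Unset Strict Implicit. Unset Printing Implicit Defensive.

Section Machines.
Variable M : nat.
Notation L := (letter M).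
Implicit Types (w u v p q : seq L) (r : seq L) (o : option (seq L)).

Definition st o (c : L) : option (seq L) :=
  match o with
  | None => None
  | Some r => if is_closer c then
       match r with
       | a :: r' => if is_opener a then (if rel_one a c then Some r' else None)
                    else Some (c :: r)
       | [::] => Some [:: c]
       end
     else Some (c :: r)
  end.

Definition st' o (c : L) : option (seq L) :=
  match o with
  | None => None
  | Some r => if is_opener c then Some (c :: r) else
       match r with
       | a :: r' => if rel_one a c then Some r' else None
       | [::] => None
       end
  end.

Definition NF o := if o is Some w then foldl st (Some [::]) w else None.
Definition run r w := foldl st' (Some r) w.
Definition D w := run [::] w == Some [::].

Lemma foldl_st_None w : foldl st None w = None.
Proof. by elim: w. Qed.
Lemma foldl_st'_None w : foldl st' None w = None.
Proof. by elim: w. Qed.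

Lemma rel_one_oc (a b : L) : rel_one a b -> is_opener a /\ is_closer b /\ ~~ is_opener b /\ ~~ is_closer a.
Proof. by case: a; case: b. Qed.
Lemma rel_zero_oc (a b : L) : rel_zero a b -> [/\ is_opener a, is_closer b & ~~ rel_one a b].
Proof. by case: a; case: b. Qed.
Lemma oc_cases (a b : L) : is_opener a -> is_closer b -> rel_one a b || rel_zero a b.
Proof. by case: a; case: b. Qed.
Lemma opener_or_closer (c : L) : is_opener c = ~~ is_closer c.
Proof. by case: c. Qed.

Lemma mstep_NF x y : mstep x y -> NF x = NF y.
Proof.
case => u v a b H /=; rewrite !foldl_cat.
  have [Ha [Hb _]] := rel_one_oc H.
  case: (foldl st (Some [::]) u) => [r|] /=; last by rewrite foldl_st_None.
  by move: Ha Hb H; case: a; case: b => //= *.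
have [Ha Hb Hn] := rel_zero_oc H.
case: (foldl st (Some [::]) u) => [r|] /=; last by rewrite foldl_st_None.
by move: Ha Hb Hn H; case: a; case: b => //= *; rewrite foldl_st_None.
Qed.

Lemma mcong_NF x y : mcong x y -> NF x = NF y.
Proof.
elim.
- exact: mstep_NF.
- by [].
- by move=> ? ? _ ->.
- by move=> ? ? ? _ -> _ ->.
Qed.

Definition HC o := if o is Some r then has (@is_closer M) r else true.
Lemma HC_st o c : HC o -> HC (st o c).
Proof.
case: o => [r|] //= H.
case Hc: (is_closer c) => /=; last by rewrite H orbT.
case: r H => [|a r'] //= H.
case Ha: (is_opener a) => /=.
  case: (rel_one a c) => //=.
  by move: H; rewrite -[is_closer a]negbK -opener_or_closer Ha.
by rewrite Hc.
Qed.
Lemma HC_foldl o w : HC o -> HC (foldl st o w).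
Proof. by elim: w o => //= c w IH o H; apply/IH/HC_st. Qed.

Lemma st_st' r w : foldl st (Some r) w = Some [::] -> run r w = Some [::].
Proof.
elim: w r => [|c w IH] r /=; first by [].
rewrite /run /=.
case Hc: (is_closer c).
  rewrite opener_or_closer Hc /=.
  case: r => [|a r'].
    move=> H; have := HC_foldl w (o := Some [:: c]); rewrite H /= Hc => /(_ isT) //.
  case Ha: (is_opener a).
    case: (rel_one a c) => //; first exact: IH.
    by rewrite foldl_st_None.
  move=> H; have := HC_foldl w (o := Some [:: c, a & r']); rewrite H /= Hc => /(_ isT) //.
rewrite opener_or_closer Hc /=; exact: IH.
Qed.

Lemma run_mcong r w : run r w = Some [::] -> mcong (Some (rev r ++ w)) (Some [::]).
Proof.
elim: w r => [|c w IH] r /=.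
  by rewrite /run /= => -[->]; apply: mcong_refl.
rewrite /run /=.
case Hc: (is_opener c).
  move=> /IH; by rewrite rev_cons cat_rcons.
case: r => [|a r']; first by rewrite foldl_st'_None.
case Ha: (rel_one a c); last by rewrite foldl_st'_None.
move=> /IH H; apply: mcong_trans H.
apply: mcong_step.
have -> : rev (a :: r') ++ c :: w = rev r' ++ [:: a; c] ++ w by rewrite rev_cons -cats1 -catA.
exact: mstep_one.
Qed.

Lemma D_red_one w : D w -> red_is_one w.
Proof. by move=> /eqP /run_mcong. Qed.

Lemma red_one_D w : red_is_one w -> D w.
Proof. by rewrite /D => /mcong_NF /= /st_st' ->. Qed.


Lemma run_cat r w1 w2 : run r (w1 ++ w2) = foldl st' (run r w1) w2.
Proof. by rewrite /run foldl_cat. Qed.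

Lemma run_ext r t w s : run r w = Some s -> run (r ++ t) w = Some (s ++ t).
Proof.
elim: w r => [|c w IH] r; first by rewrite /run /= => -[->].
rewrite /run /=.
case Hc: (is_opener c); first exact: (IH (c :: r)).
case: r => [|a r'] /=; first by rewrite foldl_st'_None.
case: (rel_one a c); last by rewrite foldl_st'_None.
exact: IH.
Qed.

Lemma run_split w r a : run (r ++ [:: a]) w = Some [::] ->
  exists p b q, [/\ w = p ++ b :: q, run r p = Some [::], rel_one a b & run [::] q = Some [::]].
Proof.
elim: w r => [|c w IH] r.
  by rewrite /run /= => -[]; case: r.
rewrite /run /=.
case Hc: (is_opener c).
  move=> /(IH (c :: r)) [p [b [q [-> H1 H2 H3]]]].
  by exists (c :: p), b, q; split => //; rewrite /run /= Hc.
case: r => [|r0 r'] /=.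
  case Ha: (rel_one a c); last by rewrite foldl_st'_None.
  by move=> H; exists [::], c, w.
case Hr: (rel_one r0 c); last by rewrite foldl_st'_None.
move=> /IH [p [b [q [-> H1 H2 H3]]]].
by exists (c :: p), b, q; split => //; rewrite /run /= Hc Hr.
Qed.

Definition Eb w : bool :=
  match w with
  | a :: t => match rev t with b :: rv => rel_one a b && D (rev rv) | [::] => false end
  | [::] => false
  end.

Lemma EbP w : reflect (exists a v b, [/\ w = a :: rcons v b, rel_one a b & D v]) (Eb w).
Proof.
apply: (iffP idP).
  case: w => [|a t] //=.
  case/lastP: t => [|v b] //=.
  rewrite rev_rcons revK => /andP [H1 H2].
  by exists a, v, b.
move=> [a [v [b [-> H1 H2]]]] /=.
by rewrite rev_rcons revK H1.
Qed.

Lemma Eb_size w : Eb w -> 1 < size w.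
Proof. by move/EbP => [a [v [b [-> _ _]]]]; rewrite /= size_rcons. Qed.

Lemma Eb_D w : Eb w -> D w.
Proof.
move/EbP => [a [v [b [-> H1 /eqP H2]]]].
have [Ha [Hb [Hb' _]]] := rel_one_oc H1.
rewrite /D /run /= Ha -cats1 foldl_cat.
have := run_ext [:: a] H2; rewrite /run /= => ->.
by rewrite /= (negbTE Hb') H1.
Qed.

Lemma D_cat u v : D u -> D v -> D (u ++ v).
Proof. by rewrite /D run_cat => /eqP ->. Qed.

Lemma D_prefix p t : D (p ++ t) -> exists s, run [::] p = Some s.
Proof.
rewrite /D run_cat; case: (run [::] p) => [s|]; first by exists s.
by rewrite foldl_st'_None.
Qed.

Lemma noprefix a p t : D (p ++ t) -> ~~ D (a :: p).
Proof.
move=> /D_prefix [s Hs].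
rewrite /D /run /=.
case Ha: (is_opener a); last by rewrite foldl_st'_None.
have := run_ext [:: a] Hs; rewrite /run /= => ->.
by case: s {Hs}.
Qed.

Lemma Eprefix u1 u2 t : Eb u1 -> Eb u2 -> u1 ++ t = u2 -> t = [::].
Proof.
move=> H1 /EbP [a [v [b [E2 Hab Dv]]]] Ht.
case/lastP: t Ht => [|t' z] // Ht.
exfalso.
move: Ht; rewrite E2 -rcons_cat -rcons_cons => /rcons_inj [Hu _].
move/EbP: (H1) => [a1 [v1 [b1 [E1 _ _]]]].
move: Hu; rewrite E1 cat_cons => -[Ha1 Hv].
move: Dv; rewrite -Hv => /(noprefix a); rewrite -Ha1 -E1.
by rewrite Eb_D.
Qed.

Lemma Eprefix_eq w i j : Eb (take i w) -> Eb (take j w) -> i <= size w -> j <= size w -> i = j.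
Proof.
wlog le_ij : i j / i <= j.
  move=> Hw Hi Hj Hsi Hsj; case: (leqP i j) => h; first exact: Hw.
  by apply/esym/Hw => //; apply: ltnW.
move=> Hi Hj Hsi Hsj.
have E : take i w ++ drop i (take j w) = take j w.
  by rewrite -{1}(take_takel w le_ij) cat_take_drop.
have Ht := Eprefix Hi Hj E.
move: (congr1 size E); rewrite Ht cats0 !size_takel //.
Qed.

Lemma D_decomp w : (D w : nat) = (w == [::]) + \sum_(k < (size w).+1) (Eb (take k w) && D (drop k w)).
Proof.
case: w => [|c w']; first by rewrite big_ord_recl big_ord0.
rewrite add0n.
case HD: (D (c :: w')).
  have HD' : run [::] (c :: w') = Some [::] by apply/eqP.
  rewrite /run /= in HD'.
  move: HD'; case Hc: (is_opener c); last by rewrite foldl_st'_None.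
  move=> /(run_split (r := [::])) [p [b [q [Ew Hp Hab Hq]]]].
  have Hk0 : (size p).+2 < (size (c :: w')).+1 by rewrite Ew /= size_cat /=; lia.
  have Htk : take (size p).+2 (c :: w') = c :: rcons p b.
    by rewrite Ew /= take_cat ltnNge leqnSn /= subSnn -cats1 /= take0.
  rewrite (bigD1 (Ordinal Hk0)) // -[nat_of_ord (Ordinal Hk0)]/((size p).+2) Htk.
  have -> : Eb (c :: rcons p b) by apply/EbP; exists c, p, b; split => //; apply/eqP.
  have -> : D (drop (size p).+2 (c :: w')).
    by rewrite Ew /= drop_cat ltnNge leqnSn /= subSnn /= drop0 /D Hq.
  rewrite big1 // => k Hk.
  case HEq: (Eb (take k _) && _) => //; move/andP: HEq => [HE _].
  exfalso; move/negP: Hk; apply; apply/eqP; apply: val_inj => /=.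
  apply: (Eprefix_eq (j := (size p).+2) HE).
  - by rewrite Htk; apply/EbP; exists c, p, b; split => //; apply/eqP.
  - by rewrite -ltnS.
  - by rewrite -ltnS.
rewrite big1 // => k _.
case HEq: (Eb (take k _) && _) => //; move/andP: HEq => [HE HDr].
by move: HD; rewrite -(cat_take_drop k (c :: w')) D_cat // Eb_D.
Qed.

Fixpoint W n : seq (seq L) :=
  if n is n'.+1 then [seq c :: w | c <- enum {: L}, w <- W n'] else [:: [::]].

Lemma count_sum (T : Type) (P : pred T) s : count P s = \sum_(x <- s) (P x : nat).
Proof. by elim: s => [|x s IH]; rewrite ?big_nil ?big_cons //= IH. Qed.

Lemma count_allpairs_cons P (s : seq L) (t : seq (seq L)) :
  count P [seq x :: y | x <- s, y <- t] = \sum_(x <- s) count (fun y => P (x :: y)) t.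
Proof.
elim: s => [|x s IH]; first by rewrite big_nil.
by rewrite big_cons /= count_cat count_map IH.
Qed.

Lemma sum_enum (F : L -> nat) : \sum_(c <- enum {: L}) F c = \sum_c F c.
Proof. by rewrite big_enum. Qed.

Lemma mem_W n w : (w \in W n) = (size w == n).
Proof.
elim: n w => [|n IH] [|c w].
- by [].
- by rewrite /= inE.
- by apply/negbTE/allpairsP => -[[x y] [_ _ /=]].
rewrite /= eqSS -IH; apply/allpairsP/idP => [[[x y] [_ Hy /= [_ ->]]] //|Hw].
by exists (c, w); split => //; rewrite mem_enum.
Qed.

Lemma uniq_W n : uniq (W n).
Proof.
elim: n => [|n IH] //=.
apply: allpairs_uniq => //; first exact: enum_uniq.
by move=> [x1 y1] [x2 y2] _ _ /= [-> ->].
Qed.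

Lemma count_split k m (Q R : pred (seq L)) :
  count (fun w => Q (take k w) && R (drop k w)) (W (k + m)) = count Q (W k) * count R (W m).
Proof.
elim: k Q => [|k IH] Q.
  rewrite add0n /=.
  under eq_count => w do rewrite take0 drop0.
  by case: (Q [::]) => /=; rewrite ?mul1n ?mul0n // count_pred0.
rewrite addSn /= !count_allpairs_cons big_distrl /=.
apply: eq_bigr => c _ /=.
exact: (IH (fun w => Q (c :: w))).
Qed.

Definition dd n := count D (W n).
Definition ee n := count Eb (W n).

Lemma count_nil n : count (pred1 [::]) (W n) = (n == 0).
Proof. by rewrite count_uniq_mem ?uniq_W // mem_W eq_sym. Qed.

Lemma dd_rec n : dd n = (n == 0) + \sum_(k < n.+1) ee k * dd (n - k).
Proof.
rewrite /dd count_sum.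
rewrite (eq_big_seq (fun w => (w == [::]) + \sum_(k < n.+1) (Eb (take k w) && D (drop k w)))); last first.
  by move=> w; rewrite mem_W => /eqP <-; exact: D_decomp.
rewrite big_split /= -count_sum count_nil; congr (_ + _).
rewrite exchange_big /=; apply: eq_bigr => k _.
rewrite -count_sum.
have Hk : k + (n - k) = n by rewrite subnKC // -ltnS.
by have := count_split k (n - k) (@Eb) D; rewrite Hk.
Qed.

Lemma ee_small n : n < 2 -> ee n = 0.
Proof.
move=> Hn; rewrite /ee count_sum big_seq big1 // => w.
by rewrite mem_W => /eqP Hw; case HE: (Eb w) => //; move: (Eb_size HE); rewrite Hw leqNgt Hn.
Qed.

Lemma Eb_cons_sum a n t : size t = n.+1 ->
  (Eb (a :: t) : nat) = \sum_(b : L) (rel_one a b && (D (take n t) && (pred1 [:: b] (drop n t)))).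
Proof.
case/lastP: t => [|v b0] //; rewrite size_rcons => -[Hv].
have -> : take n (rcons v b0) = v by rewrite -cats1 take_size_cat.
have -> : drop n (rcons v b0) = [:: b0] by rewrite -cats1 drop_size_cat.
rewrite /= rev_rcons revK (bigD1 b0) //= eqxx andbT big1 ?addn0 // => b Hb.
by rewrite eqseq_cons eq_sym (negbTE Hb) /= !andbF.
Qed.

Lemma decode_bij : bijective (@letter_decode M).
Proof.
exists (@letter_code M); first by case => [[]|[[] i]].
exact: letter_codeK.
Qed.

Lemma sum_letters (F : L -> nat) :
  \sum_(a : L) F a = F Lam + F Xi + (\sum_(i < M) F (Rho i) + \sum_(i < M) F (Eta i)).
Proof.
rewrite (reindex (@letter_decode M)); last by apply: onW_bij; exact: decode_bij.
rewrite big_sumType /= big_bool /=.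
rewrite (eq_bigr (fun p : bool * 'I_M => F (letter_decode (inr (p.1, p.2))))); last by case.
rewrite -(pair_bigA _ (fun b i => F (letter_decode (inr (b, i))))) /=.
by rewrite big_bool /= addnA.
Qed.

Lemma pairs_count : \sum_(a : L) \sum_(b : L) (rel_one a b : nat) = 2 * M.
Proof.
rewrite sum_letters.
have -> : \sum_(i < M) \sum_(b : L) (rel_one (Rho i) b : nat) = 0 by rewrite big1 // => i _; rewrite big1.
rewrite !sum_letters /= !big1_eq sum1_card card_ord.
by rewrite !add0n !addn0 mul2n addnn.
Qed.

Lemma W_S n : W n.+1 = [seq c :: w | c <- enum {: L}, w <- W n].
Proof. by []. Qed.

Lemma ee_rec n : ee n.+2 = 2 * M * dd n.
Proof.
rewrite /ee W_S count_allpairs_cons sum_enum -pairs_count big_distrl.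
apply: eq_bigr => a _; rewrite big_distrl.
rewrite count_sum (eq_big_seq (fun t => \sum_(b : L) (rel_one a b && (D (take n t) && (pred1 [:: b] (drop n t)))))); last first.
  by move=> t; rewrite mem_W => /eqP Ht; exact: Eb_cons_sum.
rewrite exchange_big; apply: eq_bigr => b _.
have Hc : count (fun t => D (take n t) && pred1 [:: b] (drop n t)) (W (n + 1)) = dd n.
  by rewrite count_split count_uniq_mem ?uniq_W // mem_W /= muln1.
rewrite addn1 in Hc.
case: (rel_one a b) => /=.
  by rewrite mul1n -Hc count_sum.
by rewrite mul0n big1.
Qed.

Definition ctx p q (o : option (seq L)) := if o is Some w then Some (p ++ w ++ q) else None.

Lemma mcong_ctx p q x y : mcong x y -> mcong (ctx p q x) (ctx p q y).
Proof.
elim => {x y}.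
- move=> x y; case => u v a b H /=; apply: mcong_step.
    have -> : p ++ (u ++ [:: a; b] ++ v) ++ q = (p ++ u) ++ [:: a; b] ++ (v ++ q) by rewrite !catA.
    have -> : p ++ (u ++ v) ++ q = (p ++ u) ++ (v ++ q) by rewrite !catA.
    exact: mstep_one.
  have -> : p ++ (u ++ [:: a; b] ++ v) ++ q = (p ++ u) ++ [:: a; b] ++ (v ++ q) by rewrite !catA.
  exact: mstep_zero.
- by move=> x; apply: mcong_refl.
- by move=> x y _ H; apply: mcong_sym.
- by move=> x y z _ H1 _ H2; apply: mcong_trans H2.
Qed.

Lemma factor_not_zero V f p q : D V -> V = p ++ f ++ q -> ~ red_is_zero f.
Proof.
move=> HD EV Hz.
have H1 := mcong_ctx p q Hz; rewrite /= -EV in H1.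
have H2 := D_red_one HD.
by have := mcong_NF (mcong_trans (mcong_sym H1) H2).
Qed.

Lemma flat_size (w : seq L) K : size (flatten (nseq K w)) = K * size w.
Proof. by elim: K => //= K IH; rewrite size_cat IH mulSn. Qed.

Lemma nth_flat (c : L) w K t : t < K * size w -> nth c (flatten (nseq K w)) t = nth c w (t %% size w).
Proof.
elim: K t => [|K IH] t //= Ht.
rewrite nth_cat; case: ltnP => H; first by rewrite modn_small.
rewrite IH; last by rewrite mulSn in Ht; rewrite ltn_subLR.
by rewrite -{2}(subnK H) modnDr.
Qed.

Lemma D_flat w K : D w -> D (flatten (nseq K w)).
Proof. by move=> Hw; elim: K => //= K IH; apply: D_cat. Qed.

Lemma mod_int (m : nat) (i : int) (k : nat) : 0 < m ->
  absz ((i + k%:Z)%R %% m%:Z)%Z = (absz (i %% m%:Z)%Z + k) %% m.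
Proof.
move=> Hm.
have Hge : (0 <= (i %% m%:Z)%Z)%R by apply: modz_ge0; rewrite eqz_nat -lt0n.
have Hj : (i %% Posz m)%Z = Posz (absz (i %% Posz m)%Z) by rewrite gez0_abs.
move: (absz _) Hj => j Hj.
by rewrite -modzDml Hj -PoszD modz_nat.
Qed.


Lemma take_flat (w : seq L) K : 0 < K -> take (size w) (flatten (nseq K w)) = w.
Proof. by case: K => //= K _; rewrite take_size_cat. Qed.

Lemma D_block w : D w -> w != [::] -> is_block w.
Proof.
case: w => [|c w0] // HD _.
set w := c :: w0.
have Hm : 0 < size w by [].
pose x := fun i : int => nth c w (absz (i %% Posz (size w))%Z).
have Hfac : forall i n, factor x i n =
    take n (drop (absz (i %% Posz (size w))%Z) (flatten (nseq (absz (i %% Posz (size w))%Z + n) w))).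
  move=> i n; set j := absz (i %% Posz (size w))%Z; set K := j + n.
  have HK : K <= K * size w by rewrite leq_pmulr.
  apply: (@eq_from_nth _ c).
    by rewrite size_mkseq size_takel // size_drop flat_size leq_subRL; rewrite /K; lia.
  move=> k; rewrite size_mkseq => Hk.
  rewrite nth_mkseq // nth_take // nth_drop nth_flat; last by rewrite /K; lia.
  by rewrite /x mod_int.
exists x; split.
  move=> i n.
  set j := absz (i %% Posz (size w))%Z; set V := flatten (nseq (j + n.+1) w).
  apply: (factor_not_zero (V := V) (p := take j V) (q := drop n.+1 (drop j V))).
    exact: D_flat.
  by rewrite Hfac -/j -/V !cat_take_drop.
exists 0%R.
rewrite Hfac.
have -> : absz (0%R %% Posz (size w))%Z = 0%N by rewrite (modz_nat 0) mod0n.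
rewrite add0n drop0.
by rewrite take_flat.
Qed.

Lemma in_E_iff w : in_E w <-> Eb w.
Proof.
split.
  move=> [_ [a [v [b [Ew Ha Hb H1 H2]]]]].
  apply/EbP; exists a, v, b; split => //; last exact: red_one_D.
  move: (red_one_D H1); rewrite /D /run /=.
  by clear -Ha Hb; case: a Ha; case: b Hb.
move=> HE; split; first by apply: D_block; [exact: Eb_D | case: w HE].
move/EbP: HE => [a [v [b [Ew Hab Hv]]]].
have [Ha [Hb _]] := rel_one_oc Hab.
exists a, v, b; split => //; last exact: D_red_one.
apply: mcong_step.
by have := @mstep_one M [::] [::] a b Hab.
Qed.


Lemma ee_conv n : ee n = 2 * M * (n == 2) + \sum_(k < n.+1) ee k * ee (n - k).
Proof.
case: n => [|[|m]].
- by rewrite big_ord1 /= !ee_small // muln0.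
- by rewrite !big_ord_recr big_ord0 /= !ee_small // muln0.
have -> : \sum_(k < m.+3) ee k * ee (m.+2 - k) = \sum_(k < m.+1) ee k * ee (m.+2 - k).
  rewrite big_ord_recr [in LHS]big_ord_recr /= subnn subSnn.
  by rewrite (ee_small (n := 0)) // (ee_small (n := 1)) // !muln0 !addn0.
rewrite ee_rec dd_rec mulnDr eqSS; congr (_ + _).
rewrite big_distrr /=; apply: eq_bigr => k _.
have Hk : k <= m by rewrite -ltnS.
have -> : m.+2 - k = (m - k).+2 by rewrite -!subSn // leqW.
by rewrite ee_rec mulnCA.
Qed.

Lemma perm_tuples n : perm_eq (map val (index_enum (n.-tuple L))) (W n).
Proof.
apply: uniq_perm.
- by rewrite map_inj_uniq ?index_enum_uniq //; exact: val_inj.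
- exact: uniq_W.
move=> w; rewrite mem_W; apply/mapP/idP => [[t _ ->]|Hw]; first by rewrite size_tuple.
by exists (Tuple Hw) => //; exact: mem_index_enum.
Qed.

Lemma card_E n : #|[set t : n.-tuple L | `[< in_E (tval t) >]]| = ee n.
Proof.
have -> : [set t : n.-tuple L | `[< in_E (tval t) >]] = [set t | Eb (tval t)].
  by apply/setP => t; rewrite !inE (asbool_equiv_eq (in_E_iff _)) asboolb.
rewrite -sum1_card (eq_bigl (fun t : n.-tuple L => Eb (tval t))); last by move=> t; rewrite inE.
rewrite sum1_count -(count_map val (@Eb)).
exact: (permP (perm_tuples n)).
Qed.

End Machines.

From mathcomp Require Import ring.
Local Open Scope ring_scope.

Theorem lemma3p2 (M : nat) :
  exists s : fps,
    [/\ s 0%N = 1,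
        (forall n, fps_mul s s n = one_minus_8Mz2 M n) &
        (forall n, genfun_E M n = 2^-1 * ((n == 0%N)%:R - s n))].
Proof.
pose e := fun n => ((ee M n)%:R : rat).
pose s := fun n : nat => ((n == 0%N)%:R - 2 * e n : rat).
exists s; split.
- by rewrite /s /e ee_small // subr0.
- move=> n; rewrite /fps_mul.
  have E1 : \sum_(k < n.+1) s k * s (n - k)%N =
      \sum_(k < n.+1) ((nat_of_ord k == 0%N)%:R * s (n - k)%N) +
      (\sum_(k < n.+1) (-2 * e k * ((n - k)%N == 0%N)%:R) +
       \sum_(k < n.+1) (4 * (e k * e (n - k)%N))).
    rewrite -!big_split; apply: eq_bigr => k _; rewrite /s /=; ring.
  have E2 : \sum_(k < n.+1) ((nat_of_ord k == 0%N)%:R * s (n - k)%N) = s n.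
    rewrite big_ord_recl /= subn0 mul1r big1 ?addr0 // => k _.
    by rewrite mul0r.
  have E3 : \sum_(k < n.+1) (-2 * e k * ((n - k)%N == 0%N)%:R) = -2 * e n.
    rewrite big_ord_recr /= subnn mulr1 big1 ?add0r // => k _.
    by rewrite /= subn_eq0 leqNgt ltn_ord mulr0.
  have E4 : \sum_(k < n.+1) (4 * (e k * e (n - k)%N)) =
            4 * ((\sum_(k < n.+1) ee M k * ee M (n - k)) %:R).
    by rewrite natr_sum mulr_sumr; apply: eq_bigr => k _; rewrite natrM.
  have E5 := ee_conv M n.
  rewrite E1 E2 E3 E4 /s /e E5 /one_minus_8Mz2.
  move: (\sum_(k < n.+1) ee M k * ee M (n - k))%N => S.
  rewrite !natrD !natrM.
  case: n {E1 E2 E3 E4 E5} => [|[|[|n]]] /=; ring.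
- move=> n; rewrite /genfun_E card_E /s /e.
  by field.
Qed.
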